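(* For $A\in C^\alpha(\Sigma,\mathbb R)$, the Aubry set satisfies $$\mathcal A(A)=\bigcap_{F\in\mathcal S(A)} I_F^{-1}\{0\}.$$
   Context: $\Sigma=\{1,\dots,d\}^{\mathbb N}$, $T$ the left shift, metric $d(\omega,\nu)=\lambda^N$, $N=\min\{k:\omega_k\ne\nu_k\}$, $0<\lambda<1$. $m_A=\max\{\int A\,d\mu:\mu\ T\text{-invariant}\}$. A calibrated sub-action for $A$ is a continuous $F$ with $F(x)=\max_{Ty=x}[F(y)+A(y)-m_A]$; $\mathcal S(A)$ is the set of $\alpha$-Hölder calibrated sub-actions. $R_F(x)=F(Tx)-F(x)-A(x)+m_A\ge0$ and $I_F(x)=\sum_{i\ge0}R_F(T^ix)\in[0,\infty]$. Mañé potential $S_A(x,y)=\lim_{\epsilon\to0}\sup\{\sum_{i=0}^{n-1}[A(T^iz)-m_A]:n\in\mathbb N,\ T^nz=y,\ d(z,x)<\epsilon\}$; Aubry set $\mathcal A(A)=\{x:S_A(x,x)=0\}$. *)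

(* Defs.v *)
From Stdlib Require Import Reals Lra Lia Classical ClassicalEpsilon.
Open Scope R_scope.

Definition Symb (d : nat) : Type := {k : nat | (1 <= k <= d)%nat}.

(* Sigma = {1..d}^N ; the coordinate omega_{k+1} of the paper is (x k). *)
Definition Sigma (d : nat) : Type := nat -> Symb d.

Definition seq_eq {d : nat} (x y : Sigma d) : Prop := forall k, x k = y k.

Definition shift {d : nat} (x : Sigma d) : Sigma d := fun k => x (S k).
Definition shiftn {d : nat} (n : nat) (x : Sigma d) : Sigma d :=
  fun k => x (n + k)%nat.

Definition first_diff {d : nat} (x y : Sigma d) (N0 : nat) : Prop :=
  x N0 <> y N0 /\ forall k, (k < N0)%nat -> x k = y k.

(* d(x,y) = lam^N with N = min{k >= 1 : omega_k <> nu_k} = N0 + 1; 0 if x = y. *)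
Definition dist {d : nat} (lam : R) (x y : Sigma d) : R :=
  match excluded_middle_informative (exists N0, first_diff x y N0) with
  | left H => lam ^ (S (proj1_sig (constructive_indefinite_description _ H)))
  | right _ => 0
  end.

Definition continuous_on_Sigma {d : nat} (lam : R) (f : Sigma d -> R) : Prop :=
  forall x eps, 0 < eps -> exists del, 0 < del /\
    forall y, dist lam x y < del -> Rabs (f y - f x) < eps.

Definition holder {d : nat} (lam alpha : R) (f : Sigma d -> R) : Prop :=
  exists C, forall x y, 0 < dist lam x y ->
    Rabs (f x - f y) <= C * Rpower (dist lam x y) alpha.

(* T-invariant Borel probability measures, represented (Riesz) as positive,
   normalized, T-invariant linear functionals on C(Sigma,R). *)
Definition invariant_prob {d : nat} (lam : R) (mu : (Sigma d -> R) -> R) : Prop :=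
  (forall f g a b, continuous_on_Sigma lam f -> continuous_on_Sigma lam g ->
     mu (fun x => a * f x + b * g x) = a * mu f + b * mu g) /\
  (forall f, continuous_on_Sigma lam f -> (forall x, 0 <= f x) -> 0 <= mu f) /\
  mu (fun _ => 1) = 1 /\
  (forall f, continuous_on_Sigma lam f -> mu (fun x => f (shift x)) = mu f).

Definition is_mA {d : nat} (lam : R) (A : Sigma d -> R) (m : R) : Prop :=
  (exists mu, invariant_prob lam mu /\ mu A = m) /\
  (forall mu, invariant_prob lam mu -> mu A <= m).

Definition calibrated {d : nat} (lam : R) (A : Sigma d -> R) (m : R)
  (F : Sigma d -> R) : Prop :=
  continuous_on_Sigma lam F /\
  forall x,
    (forall y, seq_eq (shift y) x -> F y + A y - m <= F x) /\
    (exists y, seq_eq (shift y) x /\ F y + A y - m = F x).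

Definition in_SA {d : nat} (lam alpha : R) (A : Sigma d -> R) (m : R)
  (F : Sigma d -> R) : Prop :=
  holder lam alpha F /\ calibrated lam A m F.

Definition R_F {d : nat} (A : Sigma d -> R) (m : R) (F : Sigma d -> R)
  (x : Sigma d) : R := F (shift x) - F x - A x + m.

Definition I_F_zero {d : nat} (A : Sigma d -> R) (m : R) (F : Sigma d -> R)
  (x : Sigma d) : Prop :=
  Un_cv (fun n => sum_f_R0 (fun i => R_F A m F (shiftn i x)) n) 0.

Fixpoint bsum (f : nat -> R) (n : nat) : R :=
  match n with O => 0 | S k => bsum f k + f k end.

Definition mane_set {d : nat} (lam : R) (A : Sigma d -> R) (m : R)
  (x y : Sigma d) (eps : R) (v : R) : Prop :=
  exists (n : nat) (z : Sigma d), (1 <= n)%nat /\ seq_eq (shiftn n z) y /\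
    dist lam z x < eps /\ v = bsum (fun i => A (shiftn i z) - m) n.

(* S_A(x,y) = L : the sup (a real number for small eps) tends to L as eps -> 0+. *)
Definition mane_potential_eq {d : nat} (lam : R) (A : Sigma d -> R) (m : R)
  (x y : Sigma d) (L : R) : Prop :=
  forall eta, 0 < eta -> exists del, 0 < del /\
    forall eps, 0 < eps < del ->
      exists s, is_lub (mane_set lam A m x y eps) s /\ Rabs (s - L) < eta.

Definition aubry {d : nat} (lam : R) (A : Sigma d -> R) (m : R) (x : Sigma d) : Prop :=
  mane_potential_eq lam A m x x 0.

(* Main.v *)
Require Import Defs.
From Stdlib Require Import Reals Lra Lia Classical ClassicalEpsilon FunctionalExtensionality ProofIrrelevance.
Import Defs.
Open Scope R_scope.


Definition agree {d : nat} (N : nat) (x y : Sigma d) : Prop :=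
  forall k, (k < N)%nat -> x k = y k.
Definition Sn {d : nat} (A : Sigma d -> R) (m : R) (n : nat) (z : Sigma d) : R :=
  bsum (fun i => A (shiftn i z) - m) n.
Definition concat {d : nat} (n : nat) (w y : Sigma d) : Sigma d :=
  fun k => if Nat.ltb k n then w k else y (k - n)%nat.
Definition scons {d : nat} (s : Symb d) (y : Sigma d) : Sigma d :=
  fun k => match k with O => s | S k' => y k' end.

Lemma agree_sym {d} N (x y : Sigma d) : agree N x y -> agree N y x.
Proof. intros H k Hk; symmetry; auto. Qed.
Lemma agree_le {d} N N' (x y : Sigma d) : (N' <= N)%nat -> agree N x y -> agree N' x y.
Proof. intros H1 H k Hk; apply H; lia. Qed.
Lemma agree_trans {d} N (x y z : Sigma d) : agree N x y -> agree N y z -> agree N x z.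
Proof. intros H1 H2 k Hk; rewrite H1; auto. Qed.

Lemma seq_eq_eq {d} (x y : Sigma d) : seq_eq x y -> x = y.
Proof. intros H; apply functional_extensionality; exact H. Qed.

Lemma shiftn_0 {d} (x : Sigma d) : shiftn 0 x = x.
Proof. apply functional_extensionality; intros k; reflexivity. Qed.
Lemma shiftn_add {d} a b (x : Sigma d) : shiftn a (shiftn b x) = shiftn (b + a) x.
Proof. apply functional_extensionality; intros k; unfold shiftn; f_equal; lia. Qed.
Lemma shift_shiftn {d} n (x : Sigma d) : shift (shiftn n x) = shiftn (S n) x.
Proof. apply functional_extensionality; intros k; unfold shiftn, shift; f_equal; lia. Qed.
Lemma shiftn_S {d} n (x : Sigma d) : shiftn n (shift x) = shiftn (S n) x.
Proof. apply functional_extensionality; intros k; unfold shiftn, shift; f_equal; lia. Qed.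
Lemma shiftn_concat {d} n (w y : Sigma d) : shiftn n (concat n w y) = y.
Proof. apply functional_extensionality; intros k; unfold shiftn, concat.
  destruct (Nat.ltb_spec (n + k) n); [lia|]. f_equal; lia. Qed.
Lemma agree_concat {d} n (w y : Sigma d) : agree n (concat n w y) w.
Proof. intros k Hk; unfold concat. destruct (Nat.ltb_spec k n); [auto|lia]. Qed.
Lemma agree_shiftn {d} i N (x y : Sigma d) : agree (i + N) x y -> agree N (shiftn i x) (shiftn i y).
Proof. intros H k Hk; unfold shiftn; apply H; lia. Qed.
Lemma shift_scons {d} s (y : Sigma d) : shift (scons s y) = y.
Proof. apply functional_extensionality; intros k; reflexivity. Qed.
Lemma scons_shift {d} (y : Sigma d) : y = scons (y O) (shift y).
Proof. apply functional_extensionality; intros [|k]; reflexivity. Qed.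

Lemma bsum_ext f g n : (forall i, (i < n)%nat -> f i = g i) -> bsum f n = bsum g n.
Proof. induction n; simpl; intros H; auto. rewrite IHn by (intros; apply H; lia). rewrite H by lia; auto. Qed.
Lemma bsum_add f a b : bsum f (a + b) = bsum f a + bsum (fun i => f (a + i)%nat) b.
Proof. induction b; simpl. rewrite Nat.add_0_r; ring. rewrite Nat.add_succ_r; simpl; rewrite IHb; ring. Qed.
Lemma bsum_nonneg f n : (forall i, 0 <= f i) -> 0 <= bsum f n.
Proof. intros H; induction n; simpl; [lra|]. specialize (H n); lra. Qed.
Lemma bsum_mono f a b : (forall i, 0 <= f i) -> (a <= b)%nat -> bsum f a <= bsum f b.
Proof. intros H Hab. replace b with (a + (b - a))%nat by lia. rewrite bsum_add.
  pose proof (bsum_nonneg (fun i => f (a + i)%nat) (b - a) (fun i => H _)); lra. Qed.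
Lemma bsum_lin f g a b n : bsum (fun i => a * f i + b * g i) n = a * bsum f n + b * bsum g n.
Proof. induction n; simpl; [ring|]. rewrite IHn; ring. Qed.
Lemma bsum_const c n : bsum (fun _ => c) n = INR n * c.
Proof. induction n; simpl bsum; [simpl; ring|]. rewrite IHn, S_INR; ring. Qed.
Lemma bsum_minus f c n : bsum (fun i => f i - c) n = bsum f n - INR n * c.
Proof. induction n; simpl bsum; [simpl; ring|]. rewrite IHn, S_INR; ring. Qed.
Lemma bsum_shift1 g n : bsum (fun i => g (S i)) n = bsum g n + g n - g O.
Proof. induction n; simpl; [ring|]. rewrite IHn; ring. Qed.
Lemma bsum_head f n : bsum f (S n) = f O + bsum (fun i => f (S i)) n.
Proof. induction n; simpl in *; [ring|]. rewrite IHn; ring. Qed.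
Lemma bsum_abs f g n : Rabs (bsum f n - bsum g n) <= bsum (fun i => Rabs (f i - g i)) n.
Proof. induction n; simpl. rewrite Rminus_0_r, Rabs_R0; lra.
  eapply Rle_trans; [|apply Rplus_le_compat; [exact IHn | apply Rle_refl]].
  replace (bsum f n + f n - (bsum g n + g n)) with ((bsum f n - bsum g n) + (f n - g n)) by ring.
  apply Rabs_triang. Qed.
Lemma sum_f_bsum f n : sum_f_R0 f n = bsum f (S n).
Proof. induction n; [simpl; ring|]. simpl sum_f_R0. rewrite IHn; reflexivity. Qed.

Lemma Sn_S {d} A m n (z : Sigma d) : Sn A m (S n) z = Sn A m n z + (A (shiftn n z) - m).
Proof. reflexivity. Qed.
Lemma Sn_add {d} A m a b (z : Sigma d) : Sn A m (a + b) z = Sn A m a z + Sn A m b (shiftn a z).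
Proof. unfold Sn. rewrite bsum_add. f_equal. apply bsum_ext; intros i _. rewrite shiftn_add. reflexivity. Qed.
Lemma Sn_head {d} A m n (z : Sigma d) : Sn A m (S n) z = (A z - m) + Sn A m n (shift z).
Proof. unfold Sn. rewrite bsum_head. rewrite shiftn_0. f_equal. Qed.


Lemma first_diff_exists {d} (x y : Sigma d) : (exists k, x k <> y k) -> exists N0, first_diff x y N0.
Proof.
  intros [k Hk]. revert Hk. induction k as [k IH] using (well_founded_induction Wf_nat.lt_wf). intros Hk.
  destruct (classic (exists j, (j < k)%nat /\ x j <> y j)) as [[j [Hj1 Hj2]]|Hn].
  - exact (IH j Hj1 Hj2).
  - exists k; split; auto. intros j Hj. apply NNPP; intro; apply Hn; eauto.
Qed.

Lemma first_diff_unique {d} (x y : Sigma d) a b : first_diff x y a -> first_diff x y b -> a = b.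
Proof.
  intros [Ha1 Ha2] [Hb1 Hb2]. destruct (Nat.lt_trichotomy a b) as [H|[H|H]]; auto.
  - exfalso; apply Ha1, Hb2, H.
  - exfalso; apply Hb1, Ha2, H.
Qed.

Lemma dist_cases {d} lam (x y : Sigma d) :
  (dist lam x y = 0 /\ forall k, x k = y k) \/
  (exists N0, first_diff x y N0 /\ dist lam x y = lam ^ (S N0)).
Proof.
  unfold dist. destruct (excluded_middle_informative _) as [H|H].
  - right. destruct (constructive_indefinite_description _ H) as [N0 HN0]; simpl. eauto.
  - left. split; auto. intros k. apply NNPP; intro Hk. apply H, first_diff_exists; eauto.
Qed.

Lemma pow_decr b a c : 0 <= b <= 1 -> (a <= c)%nat -> b ^ c <= b ^ a.
Proof.
  intros Hb Hac. induction Hac; [lra|]. simpl.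
  assert (0 <= b ^ m) by (apply pow_le; lra). nra.
Qed.

Lemma agree_dist {d} lam N (x y : Sigma d) : 0 < lam < 1 -> agree N x y -> dist lam x y <= lam ^ (S N).
Proof.
  intros Hl H. destruct (dist_cases lam x y) as [[H0 _]|[N0 [[HN1 HN2] H0]]].
  - rewrite H0; apply pow_le; lra.
  - rewrite H0. apply pow_decr; [lra|].
    destruct (Compare_dec.le_lt_dec N N0); [lia|]. exfalso; apply HN1, H; auto.
Qed.

Lemma dist_agree {d} lam N (x y : Sigma d) : 0 < lam < 1 -> dist lam x y < lam ^ N -> agree N x y.
Proof.
  intros Hl H k Hk. apply NNPP; intro Hne.
  destruct (dist_cases lam x y) as [[_ Hall]|[N0 [[HN1 HN2] H0]]].
  - apply Hne, Hall.
  - assert (N0 <= k)%nat. { destruct (Compare_dec.le_lt_dec N0 k); auto. exfalso; apply Hne, HN2; auto. }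
    rewrite H0 in H. assert (lam ^ N <= lam ^ S N0) by (apply pow_decr; [lra|lia]). lra.
Qed.

Definition Hol {d} (f : Sigma d -> R) (C b : R) : Prop :=
  forall N x y, agree N x y -> Rabs (f x - f y) <= C * b ^ N.

Lemma beta_bounds lam alpha : 0 < lam < 1 -> 0 < alpha -> 0 < Rpower lam alpha < 1.
Proof.
  intros Hl Ha. split; [unfold Rpower; apply exp_pos|].
  unfold Rpower. rewrite <- exp_0. apply exp_increasing.
  assert (ln lam < 0). { rewrite <- ln_1. apply ln_increasing; lra. } nra.
Qed.

Lemma Rpower_pow_lam lam alpha n : 0 < lam -> Rpower (lam ^ n) alpha = (Rpower lam alpha) ^ n.
Proof.
  intros Hl. rewrite <- (Rpower_pow n lam Hl). rewrite Rpower_mult.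
  rewrite <- (Rpower_pow n (Rpower lam alpha)) by (unfold Rpower; apply exp_pos).
  rewrite Rpower_mult. f_equal; ring.
Qed.

Lemma holder_Hol {d} lam alpha (f : Sigma d -> R) : 0 < lam < 1 -> 0 < alpha ->
  holder lam alpha f -> exists C, 0 <= C /\ Hol f C (Rpower lam alpha).
Proof.
  intros Hl Ha [C HC]. pose proof (beta_bounds lam alpha Hl Ha) as Hb.
  exists (Rabs C); split; [apply Rabs_pos|]. intros N x y Hxy.
  destruct (dist_cases lam x y) as [[_ Hall]|[N0 [[HN1 HN2] H0]]].
  - rewrite (seq_eq_eq x y Hall). unfold Rminus; rewrite Rplus_opp_r, Rabs_R0.
    apply Rmult_le_pos; [apply Rabs_pos|apply pow_le; lra].
  - assert (Hd : 0 < dist lam x y) by (rewrite H0; apply pow_lt; lra).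
    eapply Rle_trans; [apply HC; exact Hd|]. rewrite H0, Rpower_pow_lam by lra.
    assert (N <= N0)%nat. { destruct (Compare_dec.le_lt_dec N N0); auto. exfalso; apply HN1, Hxy; auto. }
    assert (Rpower lam alpha ^ S N0 <= Rpower lam alpha ^ N) by (apply pow_decr; [lra|lia]).
    assert (0 <= Rpower lam alpha ^ S N0) by (apply pow_le; lra).
    pose proof (Rle_abs C). pose proof (Rabs_pos C). nra.
Qed.

Lemma Hol_holder {d} lam alpha (f : Sigma d -> R) C : 0 < lam < 1 -> 0 < alpha -> 0 <= C ->
  Hol f C (Rpower lam alpha) -> holder lam alpha f.
Proof.
  intros Hl Ha HC H. pose proof (beta_bounds lam alpha Hl Ha) as Hb.
  exists (C / Rpower lam alpha). intros x y Hd.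
  destruct (dist_cases lam x y) as [[H0 _]|[N0 [[HN1 HN2] H0]]]; [lra|].
  rewrite H0, Rpower_pow_lam by lra. eapply Rle_trans; [apply (H N0); intros k Hk; auto|].
  simpl. right. field. lra.
Qed.

Lemma small_pow b c eps : 0 <= b < 1 -> 0 < eps -> exists N, c * b ^ N < eps.
Proof.
  intros Hb He. destruct (Rle_lt_dec c 0).
  - exists O; simpl; lra.
  - assert (Habs : Rabs b < 1) by (rewrite Rabs_right; lra).
    destruct (pow_lt_1_zero b Habs (eps / c)) as [N HN]; [apply Rdiv_lt_0_compat; lra|].
    exists N. specialize (HN N (le_n _)). rewrite Rabs_right in HN by (apply Rle_ge, pow_le; lra).
    apply (Rmult_lt_compat_l c) in HN; [|lra]. replace (c * (eps / c)) with eps in HN by (field; lra). lra.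
Qed.

Lemma Hol_cont {d} lam (f : Sigma d -> R) C b : 0 < lam < 1 -> 0 <= b < 1 -> Hol f C b ->
  continuous_on_Sigma lam f.
Proof.
  intros Hl Hb H x eps He. destruct (small_pow b C eps Hb He) as [N HN].
  exists (lam ^ N); split; [apply pow_lt; lra|]. intros y Hy.
  apply dist_agree in Hy; [|lra]. eapply Rle_lt_trans; [|exact HN].
  rewrite Rabs_minus_sym. apply H. exact Hy.
Qed.


Lemma Sn_hol_aux {d} (A : Sigma d -> R) m CA b : 0 <= CA -> 0 <= b < 1 -> Hol A CA b ->
  forall N n z z', agree (n + N) z z' ->
  Rabs (Sn A m n z - Sn A m n z') <= CA / (1 - b) * (b ^ N - b ^ (N + n)).
Proof.
  intros HC Hb HA N n. induction n as [|n IH]; intros z z' Hzz.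
  - unfold Sn; simpl. rewrite Nat.add_0_r. rewrite Rminus_0_r, Rabs_R0. right; ring.
  - rewrite !Sn_head.
    assert (H1 : Rabs (A z - A z') <= CA * b ^ (S n + N)) by (apply HA; exact Hzz).
    assert (H2 := IH (shift z) (shift z') (fun k Hk => Hzz (S k) ltac:(lia))).
    replace (A z - m + Sn A m n (shift z) - (A z' - m + Sn A m n (shift z')))
      with ((A z - A z') + (Sn A m n (shift z) - Sn A m n (shift z'))) by ring.
    eapply Rle_trans; [apply Rabs_triang|].
    replace (S n + N)%nat with (S (N + n)) in H1 by lia.
    replace (N + S n)%nat with (S (N + n)) by lia.
    simpl in H1 |- *. set (p := b ^ (N + n)) in *.
    assert (0 <= p) by (apply pow_le; lra).
    assert (CA * (b * p) <= CA * p) by (apply Rmult_le_compat_l; nra).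
    assert (E : CA / (1 - b) * (b ^ N - b * p) = CA / (1 - b) * (b ^ N - p) + CA * p) by (field; lra).
    rewrite E. lra.
Qed.

Lemma Sn_hol {d} (A : Sigma d -> R) m CA b : 0 <= CA -> 0 <= b < 1 -> Hol A CA b ->
  forall N n z z', agree (n + N) z z' ->
  Rabs (Sn A m n z - Sn A m n z') <= CA / (1 - b) * b ^ N.
Proof.
  intros HC Hb HA N n z z' H. eapply Rle_trans; [apply (Sn_hol_aux A m CA b HC Hb HA N n z z' H)|].
  assert (0 <= b ^ (N + n)) by (apply pow_le; lra).
  assert (0 <= CA / (1 - b)) by (apply Rmult_le_pos; [lra|apply Rlt_le, Rinv_0_lt_compat; lra]).
  nra.
Qed.

Definition permu {d} (n : nat) (w : Sigma d) : (Sigma d -> R) -> R :=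
  fun f => bsum (fun i => f (shiftn i w)) n / INR n.

Lemma permu_inv {d} lam n (w : Sigma d) : (1 <= n)%nat -> (forall k, w (n + k)%nat = w k) ->
  invariant_prob lam (permu n w).
Proof.
  intros Hn Hw. assert (HnR : 0 < INR n) by (apply lt_0_INR; lia).
  unfold permu; repeat split.
  - intros f g a b _ _. cbv beta. rewrite (bsum_lin (fun i => f (shiftn i w)) (fun i => g (shiftn i w))).
    field; lra.
  - intros f _ Hf. apply Rmult_le_pos; [apply bsum_nonneg; intros; apply Hf|apply Rlt_le, Rinv_0_lt_compat; lra].
  - rewrite bsum_const. field; lra.
  - intros f _. f_equal.
    rewrite (bsum_ext _ (fun i => f (shiftn (S i) w))) by (intros; rewrite shift_shiftn; auto).
    rewrite (bsum_shift1 (fun i => f (shiftn i w))).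
    assert (E : shiftn n w = shiftn 0 w) by (apply functional_extensionality; intros k; apply Hw).
    rewrite E; ring.
Qed.

Definition per {d} (n : nat) (z : Sigma d) : Sigma d := fun k => z (k mod n)%nat.

Lemma per_periodic {d} n (z : Sigma d) : forall k, per n z (n + k)%nat = per n z k.
Proof. intros k; unfold per. f_equal. replace (n + k)%nat with (k + 1 * n)%nat by lia.
  apply Nat.Div0.mod_add. Qed.

Lemma per_agree {d} n N (z x : Sigma d) : (1 <= n)%nat -> shiftn n z = x -> agree N z x -> agree (n + N) z (per n z).
Proof.
  intros Hn Hzx Hag j. induction j as [j IH] using (well_founded_induction Wf_nat.lt_wf). intros Hj.
  destruct (Compare_dec.le_lt_dec n j) as [Hle|Hlt].
  - assert (E1 : z j = x (j - n)%nat) by (rewrite <- Hzx; unfold shiftn; f_equal; lia).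
    rewrite E1. rewrite <- (Hag (j - n)%nat) by lia.
    rewrite IH by lia. replace j with (n + (j - n))%nat at 2 by lia.
    rewrite per_periodic; reflexivity.
  - unfold per. rewrite Nat.mod_small by lia. reflexivity.
Qed.

Lemma closing {d} lam (A : Sigma d -> R) m CA b :
  0 <= CA -> 0 <= b < 1 -> Hol A CA b ->
  (forall mu, invariant_prob lam mu -> mu A <= m) ->
  forall n z x N, (1 <= n)%nat -> shiftn n z = x -> agree N z x ->
  Sn A m n z <= CA / (1 - b) * b ^ N.
Proof.
  intros HC Hb HA Hm n z x N Hn Hzx Hag.
  set (w := per n z).
  assert (Hper : Sn A m n w <= 0).
  { specialize (Hm _ (permu_inv lam n w Hn (per_periodic n z))). unfold permu in Hm.
    unfold Sn. rewrite bsum_minus.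
    assert (HnR : 0 < INR n) by (apply lt_0_INR; lia).
    apply (Rmult_le_compat_r (INR n)) in Hm; [|lra].
    replace (bsum (fun i => A (shiftn i w)) n / INR n * INR n) with (bsum (fun i => A (shiftn i w)) n) in Hm
      by (field; lra). lra. }
  pose proof (Sn_hol A m CA b HC Hb HA N n z w (per_agree n N z x Hn Hzx Hag)).
  pose proof (Rle_abs (Sn A m n z - Sn A m n w)). lra.
Qed.


Lemma cont_comp_shiftn {d} lam (f : Sigma d -> R) n : 0 < lam < 1 ->
  continuous_on_Sigma lam f -> continuous_on_Sigma lam (fun y => f (shiftn n y)).
Proof.
  intros Hl Hf x eps He. destruct (Hf (shiftn n x) eps He) as [del [Hd H]].
  destruct (small_pow lam 1 del ltac:(lra) Hd) as [N HN].
  exists (lam ^ (n + N)); split; [apply pow_lt; lra|]. intros y Hy.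
  apply H. apply dist_agree in Hy; [|lra]. apply agree_shiftn in Hy.
  eapply Rle_lt_trans; [apply agree_dist; [lra|exact Hy]|].
  assert (lam ^ S N <= lam ^ N) by (apply pow_decr; [lra|lia]). lra.
Qed.

Lemma cont_const {d} lam (c : R) : continuous_on_Sigma (d:=d) lam (fun _ => c).
Proof. intros x eps He. exists 1; split; [lra|]. intros; rewrite Rminus_diag, Rabs_R0; lra. Qed.

Lemma cont_lin {d} lam (f g : Sigma d -> R) a b : continuous_on_Sigma lam f -> continuous_on_Sigma lam g ->
  continuous_on_Sigma lam (fun y => a * f y + b * g y).
Proof.
  intros Hf Hg x eps He.
  set (e := eps / (2 * (Rabs a + Rabs b + 1))).
  assert (He' : 0 < e) by (unfold e; apply Rdiv_lt_0_compat; [lra|]; pose proof (Rabs_pos a); pose proof (Rabs_pos b); lra).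
  destruct (Hf x e He') as [d1 [Hd1 H1]]. destruct (Hg x e He') as [d2 [Hd2 H2]].
  exists (Rmin d1 d2); split; [apply Rmin_pos; auto|]. intros y Hy.
  specialize (H1 y ltac:(pose proof (Rmin_l d1 d2); lra)). specialize (H2 y ltac:(pose proof (Rmin_r d1 d2); lra)).
  replace (a * f y + b * g y - (a * f x + b * g x)) with (a * (f y - f x) + b * (g y - g x)) by ring.
  eapply Rle_lt_trans; [apply Rabs_triang|]. rewrite !Rabs_mult.
  assert (Rabs a * Rabs (f y - f x) <= Rabs a * e) by (apply Rmult_le_compat_l; [apply Rabs_pos|lra]).
  assert (Rabs b * Rabs (g y - g x) <= Rabs b * e) by (apply Rmult_le_compat_l; [apply Rabs_pos|lra]).
  assert ((Rabs a + Rabs b) * e < eps).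
  { unfold e. pose proof (Rabs_pos a); pose proof (Rabs_pos b).
    apply (Rmult_lt_reg_r (2 * (Rabs a + Rabs b + 1))); [lra|].
    field_simplify; [nra|lra]. }
  lra.
Qed.

Lemma mu_lin' {d} lam mu (f g : Sigma d -> R) a b : invariant_prob lam mu ->
  continuous_on_Sigma lam f -> continuous_on_Sigma lam g ->
  mu (fun y => a * f y + b * g y) = a * mu f + b * mu g.
Proof. intros [H _] Hf Hg; apply H; auto. Qed.

Lemma mu_const {d} lam mu (c : R) : invariant_prob (d:=d) lam mu -> mu (fun _ => c) = c.
Proof.
  intros Hmu. pose proof (mu_lin' lam mu (fun _ => 1) (fun _ => 1) c 0 Hmu (cont_const lam 1) (cont_const lam 1)) as H.
  destruct Hmu as [_ [_ [H1 _]]]. cbv beta in H.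
  replace (fun _ : Sigma d => c * 1 + 0 * 1) with (fun _ : Sigma d => c) in H
    by (apply functional_extensionality; intros; ring).
  rewrite H, H1; ring.
Qed.

Lemma mu_shiftn {d} lam mu (f : Sigma d -> R) n : 0 < lam < 1 -> invariant_prob lam mu ->
  continuous_on_Sigma lam f -> mu (fun y => f (shiftn n y)) = mu f.
Proof.
  intros Hl Hmu Hf. induction n.
  - f_equal.
  - rewrite <- IHn. destruct Hmu as [_ [_ [_ Hinv]]].
    rewrite <- (Hinv (fun y => f (shiftn n y))) by (apply cont_comp_shiftn; auto).
    f_equal.
Qed.

Lemma cont_A_shift {d} lam (A : Sigma d -> R) CA b n : 0 < lam < 1 -> 0 <= b < 1 -> Hol A CA b ->
  continuous_on_Sigma lam (fun y => A (shiftn n y)).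
Proof. intros Hl Hb HA. apply cont_comp_shiftn; auto. eapply Hol_cont; eauto. Qed.

Lemma cont_Sn {d} lam (A : Sigma d -> R) m CA b n : 0 < lam < 1 -> 0 <= b < 1 -> 0 <= CA -> Hol A CA b ->
  continuous_on_Sigma lam (Sn A m n).
Proof.
  intros Hl Hb HC HA. induction n.
  - unfold Sn; simpl. apply cont_const.
  - pose proof (cont_lin lam (Sn A m n) (fun y => A (shiftn n y)) 1 1 IHn (cont_A_shift lam A CA b n Hl Hb HA)) as H.
    pose proof (cont_lin lam (fun y => 1 * Sn A m n y + 1 * A (shiftn n y)) (fun _ => 1) 1 (-m) H (cont_const lam 1)) as H2.
    replace (Sn A m (S n)) with (fun y => 1 * (1 * Sn A m n y + 1 * A (shiftn n y)) + - m * 1); auto.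
    apply functional_extensionality; intros y; rewrite Sn_S; ring.
Qed.

Lemma mu_Sn {d} lam mu (A : Sigma d -> R) m CA b n : 0 < lam < 1 -> 0 <= b < 1 -> 0 <= CA -> Hol A CA b ->
  invariant_prob lam mu -> mu A = m -> mu (Sn A m n) = 0.
Proof.
  intros Hl Hb HC HA Hmu HmA. induction n.
  - unfold Sn; simpl. apply (mu_const lam mu 0 Hmu).
  - replace (Sn A m (S n)) with (fun y => 1 * Sn A m n y + 1 * (fun y => 1 * A (shiftn n y) + (-m) * 1) y)
      by (apply functional_extensionality; intros y; rewrite Sn_S; ring).
    rewrite (mu_lin' lam); auto.
    2: apply cont_Sn with CA b; auto.
    2: apply cont_lin; [apply cont_A_shift with CA b; auto|apply cont_const].
    rewrite IHn. rewrite (mu_lin' lam mu (fun y => A (shiftn n y)) (fun _ => 1)); auto.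
    2: apply cont_A_shift with CA b; auto. 2: apply cont_const.
    rewrite (mu_shiftn lam); auto. 2: eapply Hol_cont; eauto.
    rewrite HmA. destruct Hmu as [_ [_ [H1 _]]]. rewrite H1. ring.
Qed.

Lemma lower_exist {d} lam (A : Sigma d -> R) m CA b : 0 < lam < 1 -> 0 <= b < 1 -> 0 <= CA -> Hol A CA b ->
  (exists mu, invariant_prob lam mu /\ mu A = m) ->
  forall n del, 0 < del -> exists z, Sn A m n z > - del.
Proof.
  intros Hl Hb HC HA [mu [Hmu HmA]] n del Hd. apply NNPP; intro Hn.
  assert (Hall : forall z, Sn A m n z <= - del) by (intros z; apply Rnot_lt_le; intro; apply Hn; eauto).
  pose proof Hmu as [Hlin [Hpos [H1 Hinv]]].
  assert (Hc : continuous_on_Sigma lam (fun y => (-1) * Sn A m n y + (- del) * 1)).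
  { apply cont_lin; [apply cont_Sn with CA b; auto|apply cont_const]. }
  specialize (Hpos _ Hc ltac:(intros z; specialize (Hall z); lra)).
  rewrite Hlin in Hpos; [|apply cont_Sn with CA b; auto|apply cont_const].
  rewrite (mu_Sn lam mu A m CA b n Hl Hb HC HA Hmu HmA), H1 in Hpos. lra.
Qed.

Lemma good_chain {d} lam (A : Sigma d -> R) m CA b : 0 < lam < 1 -> 0 <= b < 1 -> 0 <= CA -> Hol A CA b ->
  (exists mu, invariant_prob lam mu /\ mu A = m) ->
  forall (y : Sigma d) n, exists z, shiftn n z = y /\ Sn A m n z >= -1 - CA / (1 - b).
Proof.
  intros Hl Hb HC HA Hex y n. destruct (lower_exist lam A m CA b Hl Hb HC HA Hex n 1 ltac:(lra)) as [z0 Hz0].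
  exists (concat n z0 y). split; [apply shiftn_concat|].
  assert (Hag : agree (n + 0) (concat n z0 y) z0) by (rewrite Nat.add_0_r; apply agree_concat).
  pose proof (Sn_hol A m CA b HC Hb HA 0 n _ _ Hag) as H. simpl in H. rewrite Rmult_1_r in H.
  pose proof (Rle_abs (Sn A m n z0 - Sn A m n (concat n z0 y))). rewrite Rabs_minus_sym in H. lra.
Qed.


Lemma fin_swap (d : nat) (P : nat -> nat -> Prop) :
  (forall s, (s <= d)%nat -> exists K0, forall K, (K0 <= K)%nat -> P s K) ->
  exists K0, forall K, (K0 <= K)%nat -> forall s, (s <= d)%nat -> P s K.
Proof.
  induction d; intros H.
  - destruct (H 0%nat (le_n _)) as [K0 HK0]. exists K0. intros K HK s Hs.
    replace s with 0%nat by lia. auto.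
  - destruct IHd as [K1 HK1]; [intros s Hs; apply H; lia|].
    destruct (H (S d) (le_n _)) as [K2 HK2]. exists (Nat.max K1 K2). intros K HK s Hs.
    destruct (Nat.eq_dec s (S d)) as [->|Hne]; [apply HK2; lia|apply HK1; lia].
Qed.

Lemma symb_eq {d} (u v : Symb d) : proj1_sig u = proj1_sig v -> u = v.
Proof. destruct u as [a pa], v as [b pb]; simpl; intros ->. f_equal; apply proof_irrelevance. Qed.

Lemma recur {d} M : forall (S0 : nat -> Prop) (ys : nat -> Sigma d),
  (forall K, exists n, (K <= n)%nat /\ S0 n) ->
  exists a, S0 a /\ forall K, exists b, (K <= b)%nat /\ S0 b /\ agree M (ys b) (ys a).
Proof.
  induction M; intros S0 ys Hinf.
  - destruct (Hinf 0%nat) as [a [_ Ha]]. exists a; split; auto. intros K.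
    destruct (Hinf K) as [b [Hb1 Hb2]]. exists b; repeat split; auto. intros k Hk; lia.
  - assert (Hs : exists s, forall K, exists n, (K <= n)%nat /\ S0 n /\ proj1_sig (ys n O) = s).
    { apply NNPP; intro Hn.
      destruct (fin_swap d (fun s K => forall n, (K <= n)%nat -> S0 n -> proj1_sig (ys n O) <> s)) as [K0 HK0].
      - intros s _. apply NNPP; intro Hn2. apply Hn. exists s. intros K. apply NNPP; intro Hn3.
        apply Hn2. exists K. intros K' HK' n Hn' HS Heq. apply Hn3. exists n; repeat split; auto; lia.
      - destruct (Hinf K0) as [n [Hn1 Hn2]].
        destruct (proj2_sig (ys n O)) as [_ Hd].
        exact (HK0 K0 (le_n _) (proj1_sig (ys n O)) Hd n Hn1 Hn2 eq_refl). }
    destruct Hs as [s Hs].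
    destruct (IHM (fun n => S0 n /\ proj1_sig (ys n O) = s) (fun n => shift (ys n))) as [a [[Ha1 Ha2] Ha3]].
    { intros K. destruct (Hs K) as [n [H1 [H2 H3]]]. exists n; auto. }
    exists a; split; auto. intros K. destruct (Ha3 K) as [b [Hb1 [[Hb2 Hb3] Hb4]]].
    exists b; repeat split; auto. intros [|k] Hk.
    + apply symb_eq. congruence.
    + apply (Hb4 k). lia.
Qed.


Definition lub_of (E : R -> Prop) : R :=
  match excluded_middle_informative (exists s, is_lub E s) with
  | left H => proj1_sig (constructive_indefinite_description _ H)
  | right _ => 0 end.

Lemma lub_of_spec E : (exists v, E v) -> (exists B, forall v, E v -> v <= B) -> is_lub E (lub_of E).
Proof.
  intros Hne [B HB]. unfold lub_of. destruct (excluded_middle_informative _) as [H|H].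
  - destruct (constructive_indefinite_description _ H); simpl; auto.
  - exfalso. apply H. destruct (completeness E) as [s Hs]; eauto. exists B; intros v Hv; auto.
Qed.

Definition Hyps {d} lam (A : Sigma d -> R) m CA b : Prop :=
  0 < lam < 1 /\ 0 <= b < 1 /\ 0 <= CA /\ Hol A CA b /\
  (forall mu, invariant_prob lam mu -> mu A <= m) /\ (exists mu, invariant_prob lam mu /\ mu A = m).

Definition Echain {d} (A : Sigma d -> R) m (c : Sigma d) M K (y : Sigma d) (v : R) : Prop :=
  exists n z, (K + M + 1 <= n)%nat /\ agree M z c /\ shiftn n z = y /\ v = Sn A m n z.

Definition U {d} (A : Sigma d -> R) m c M K y : R := lub_of (Echain A m c M K y).
Definition uC {d} (A : Sigma d -> R) m c M (y : Sigma d) : R :=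
  - lub_of (fun v => exists K, v = - U A m c M K y).

Lemma Sn_lower {d} (A : Sigma d -> R) m Bd : (forall w, Rabs (A w - m) <= Bd) ->
  forall n z, - INR n * Bd <= Sn A m n z.
Proof.
  intros HB n z. induction n; [unfold Sn; simpl; lra|].
  rewrite Sn_S, S_INR. specialize (HB (shiftn n z)). pose proof (Rle_abs (-(A (shiftn n z) - m))).
  rewrite Rabs_Ropp in H. lra.
Qed.

Definition Lb {d} (A : Sigma d -> R) m CA b (c : Sigma d) M : R :=
  - INR M * (CA + Rabs (A c - m)) - 1 - CA / (1 - b).

Lemma Echain_props {d} lam (A : Sigma d -> R) m CA b c M K y : Hyps lam A m CA b ->
  (forall v, Echain A m c M K y v -> v <= CA / (1 - b)) /\
  (exists v, Echain A m c M K y v /\ Lb A m CA b c M <= v).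
Proof.
  intros (Hl & Hb & HC & HA & Hup & Hex). split.
  - intros v (n & z & Hn & Hag & Hz & ->).
    pose proof (closing lam A m CA b HC Hb HA Hup n z (shiftn n z) 0 ltac:(lia) eq_refl (fun k Hk => ltac:(lia))).
    simpl in H; lra.
  - destruct (good_chain lam A m CA b Hl Hb HC HA Hex y (S K)) as [g [Hg1 Hg2]].
    set (z := concat M c g).
    exists (Sn A m (M + S K) z). split.
    + exists (M + S K)%nat, z. repeat split; [lia|apply agree_concat|].
      rewrite <- shiftn_add. unfold z; rewrite shiftn_concat; auto.
    + rewrite Sn_add. unfold z at 2; rewrite shiftn_concat.
      assert (HB : forall w, Rabs (A w - m) <= CA + Rabs (A c - m)).
      { intros w. replace (A w - m) with ((A w - A c) + (A c - m)) by ring.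
        eapply Rle_trans; [apply Rabs_triang|]. apply Rplus_le_compat_r.
        pose proof (HA 0%nat w c (fun k Hk => ltac:(lia))). simpl in H; lra. }
      pose proof (Sn_lower A m _ HB M z). unfold Lb. lra.
Qed.

Lemma U_spec {d} lam (A : Sigma d -> R) m CA b c M K y : Hyps lam A m CA b ->
  is_lub (Echain A m c M K y) (U A m c M K y).
Proof.
  intros H. destruct (Echain_props lam A m CA b c M K y H) as [H1 [v [Hv _]]].
  apply lub_of_spec; eauto.
Qed.

Lemma U_bounds {d} lam (A : Sigma d -> R) m CA b c M K y : Hyps lam A m CA b ->
  Lb A m CA b c M <= U A m c M K y <= CA / (1 - b).
Proof.
  intros H. destruct (Echain_props lam A m CA b c M K y H) as [H1 [v [Hv Hv2]]].
  destruct (U_spec lam A m CA b c M K y H) as [Hs1 Hs2]. split.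
  - specialize (Hs1 v Hv). lra.
  - apply Hs2. intros w Hw; auto.
Qed.

Lemma U_mono {d} lam (A : Sigma d -> R) m CA b c M K K' y : Hyps lam A m CA b -> (K <= K')%nat ->
  U A m c M K' y <= U A m c M K y.
Proof.
  intros H HK. destruct (U_spec lam A m CA b c M K' y H) as [_ H2]. apply H2.
  intros v (n & z & Hn & Hz). destruct (U_spec lam A m CA b c M K y H) as [H1 _]. apply H1.
  exists n, z; split; [lia|auto].
Qed.

Lemma U_hol {d} lam (A : Sigma d -> R) m CA b c M K y y' L : Hyps lam A m CA b -> agree L y y' ->
  U A m c M K y <= U A m c M K y' + CA / (1 - b) * b ^ L.
Proof.
  intros H Hyy. pose proof H as (Hl & Hb & HC & HA & Hup & Hex).
  destruct (U_spec lam A m CA b c M K y H) as [_ H2].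
  assert (Hub : is_upper_bound (Echain A m c M K y) (U A m c M K y' + CA / (1 - b) * b ^ L)).
  { intros v (n & z & Hn & Hag & Hz & ->).
    set (z' := concat n z y').
    destruct (U_spec lam A m CA b c M K y' H) as [H1 _].
    assert (Hz' : Echain A m c M K y' (Sn A m n z')).
    { exists n, z'; repeat split; auto.
      - intros k Hk. unfold z', concat. destruct (Nat.ltb_spec k n); [apply Hag; auto|lia].
      - apply shiftn_concat. }
    specialize (H1 _ Hz').
    assert (Hagz : agree (n + L) z z').
    { intros k Hk. unfold z', concat. destruct (Nat.ltb_spec k n); auto.
      rewrite <- (Hyy (k - n)%nat) by lia. rewrite <- Hz. unfold shiftn. f_equal; lia. }
    pose proof (Sn_hol A m CA b HC Hb HA L n z z' Hagz).
    pose proof (Rle_abs (Sn A m n z - Sn A m n z')). lra. }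
  apply H2 in Hub. exact Hub.
Qed.

Lemma uC_spec {d} lam (A : Sigma d -> R) m CA b c M y : Hyps lam A m CA b ->
  is_lub (fun v => exists K, v = - U A m c M K y) (- uC A m c M y).
Proof.
  intros H. unfold uC. rewrite Ropp_involutive. apply lub_of_spec.
  - exists (- U A m c M 0 y); eauto.
  - exists (- Lb A m CA b c M). intros v [K ->].
    pose proof (U_bounds lam A m CA b c M K y H). lra.
Qed.

Lemma uC_le_U {d} lam (A : Sigma d -> R) m CA b c M K y : Hyps lam A m CA b ->
  uC A m c M y <= U A m c M K y.
Proof.
  intros H. destruct (uC_spec lam A m CA b c M y H) as [H1 _].
  specialize (H1 (- U A m c M K y) (ex_intro _ K eq_refl)). lra.
Qed.

Lemma uC_ge {d} lam (A : Sigma d -> R) m CA b c M y a : Hyps lam A m CA b ->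
  (forall K, a <= U A m c M K y) -> a <= uC A m c M y.
Proof.
  intros H Ha. destruct (uC_spec lam A m CA b c M y H) as [_ H2].
  assert (- uC A m c M y <= - a); [|lra]. apply H2. intros v [K ->]. specialize (Ha K); lra.
Qed.

Lemma uC_approx {d} lam (A : Sigma d -> R) m CA b c M y eps : Hyps lam A m CA b -> 0 < eps ->
  exists K, U A m c M K y < uC A m c M y + eps.
Proof.
  intros H He. apply NNPP; intro Hn.
  assert (uC A m c M y + eps <= uC A m c M y); [|lra].
  apply uC_ge with lam CA b; auto. intros K. apply Rnot_lt_le; intro; apply Hn; eauto.
Qed.

Lemma uC_bounds {d} lam (A : Sigma d -> R) m CA b c M y : Hyps lam A m CA b ->
  Lb A m CA b c M <= uC A m c M y <= CA / (1 - b).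
Proof.
  intros H. split.
  - apply uC_ge with lam CA b; auto. intros K; apply (U_bounds lam A m CA b c M K y H).
  - pose proof (uC_le_U lam A m CA b c M 0 y H). pose proof (U_bounds lam A m CA b c M 0 y H). lra.
Qed.

Lemma uC_hol {d} lam (A : Sigma d -> R) m CA b c M : Hyps lam A m CA b ->
  Hol (uC A m c M) (CA / (1 - b)) b.
Proof.
  intros H L y y' Hyy.
  assert (H1 : uC A m c M y <= uC A m c M y' + CA / (1 - b) * b ^ L).
  { assert (uC A m c M y - CA / (1 - b) * b ^ L <= uC A m c M y'); [|lra].
    apply uC_ge with lam CA b; auto. intros K.
    pose proof (uC_le_U lam A m CA b c M K y H). pose proof (U_hol lam A m CA b c M K y y' L H Hyy). lra. }
  assert (H2 : uC A m c M y' <= uC A m c M y + CA / (1 - b) * b ^ L).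
  { assert (uC A m c M y' - CA / (1 - b) * b ^ L <= uC A m c M y); [|lra].
    apply uC_ge with lam CA b; auto. intros K.
    pose proof (uC_le_U lam A m CA b c M K y' H). pose proof (U_hol lam A m CA b c M K y' y L H (agree_sym _ _ _ Hyy)). lra. }
  apply Rabs_le; lra.
Qed.


Lemma U_step {d} lam (A : Sigma d -> R) m CA b c M K y y' : Hyps lam A m CA b -> shift y' = y ->
  U A m c M K y' + A y' - m <= U A m c M (S K) y.
Proof.
  intros H Hy. destruct (U_spec lam A m CA b c M K y' H) as [_ H2].
  assert (U A m c M K y' <= U A m c M (S K) y - A y' + m); [|lra].
  apply H2. intros v (n & z & Hn & Hag & Hz & ->).
  destruct (U_spec lam A m CA b c M (S K) y H) as [H1 _].
  assert (Sn A m (S n) z <= U A m c M (S K) y).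
  { apply H1. exists (S n), z; repeat split; auto; [lia|]. rewrite <- shift_shiftn, Hz; auto. }
  rewrite Sn_S, Hz in H0. lra.
Qed.

Lemma uC_sub {d} lam (A : Sigma d -> R) m CA b c M y y' : Hyps lam A m CA b -> shift y' = y ->
  uC A m c M y' + A y' - m <= uC A m c M y.
Proof.
  intros H Hy. apply uC_ge with lam CA b; auto. intros K.
  pose proof (uC_le_U lam A m CA b c M K y' H).
  pose proof (U_step lam A m CA b c M K y y' H Hy).
  pose proof (U_mono lam A m CA b c M K (S K) y H ltac:(lia)). lra.
Qed.

Lemma U_step_inv {d} lam (A : Sigma d -> R) m CA b c M K y a : Hyps lam A m CA b ->
  (forall s : Symb d, U A m c M K (scons s y) + A (scons s y) - m <= a) ->
  U A m c M (S K) y <= a.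
Proof.
  intros H Ha. destruct (U_spec lam A m CA b c M (S K) y H) as [_ H2]. apply H2.
  intros v (n & z & Hn & Hag & Hz & ->). destruct n as [|n]; [lia|].
  set (y' := shiftn n z).
  assert (Hy' : y' = scons (y' O) y).
  { rewrite (scons_shift y') at 1. f_equal. unfold y'. rewrite shift_shiftn; auto. }
  rewrite Sn_S. fold y'.
  destruct (U_spec lam A m CA b c M K y' H) as [H1 _].
  assert (Sn A m n z <= U A m c M K y') by (apply H1; exists n, z; repeat split; auto; lia).
  specialize (Ha (y' O)). rewrite <- Hy' in Ha. lra.
Qed.

Lemma uC_attain {d} lam (A : Sigma d -> R) m CA b c M y : Hyps lam A m CA b ->
  exists y', shift y' = y /\ uC A m c M y' + A y' - m = uC A m c M y.
Proof.
  intros H. apply NNPP; intro Hn.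
  assert (Hlt : forall s : Symb d, uC A m c M (scons s y) + A (scons s y) - m < uC A m c M y).
  { intros s. pose proof (uC_sub lam A m CA b c M y (scons s y) H (shift_scons s y)).
    destruct H0; auto. exfalso; apply Hn. exists (scons s y); split; auto; apply shift_scons. }
  assert (Hev : forall s : Symb d, exists K0, forall K, (K0 <= K)%nat ->
     U A m c M K (scons s y) + A (scons s y) - m <= uC A m c M y - / INR (S K)).
  { intros s. set (g := uC A m c M y - (uC A m c M (scons s y) + A (scons s y) - m)).
    assert (Hg : 0 < g) by (unfold g; specialize (Hlt s); lra).
    destruct (uC_approx lam A m CA b c M (scons s y) (g / 2) H ltac:(lra)) as [K1 HK1].
    destruct (INR_archimed (g / 2) 1 ltac:(lra)) as [K2 HK2].
    exists (Nat.max K1 K2). intros K HK.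
    pose proof (U_mono lam A m CA b c M K1 K (scons s y) H ltac:(lia)).
    assert (HK3 : INR K2 <= INR (S K)) by (apply le_INR; lia).
    assert (/ INR (S K) < g / 2).
    { assert (0 < INR (S K)) by (apply lt_0_INR; lia).
      apply (Rmult_lt_reg_l (INR (S K))); auto. rewrite Rinv_r by lra. nra. }
    unfold g in *. lra. }
  destruct (fin_swap d (fun s K => forall Hs : (1 <= s <= d)%nat,
     U A m c M K (scons (exist _ s Hs) y) + A (scons (exist _ s Hs) y) - m <= uC A m c M y - / INR (S K)))
    as [K0 HK0].
  { intros s _. destruct (classic (1 <= s <= d)%nat) as [Hs|Hs].
    - destruct (Hev (exist _ s Hs)) as [K0 HK0]. exists K0. intros K HK Hs'.
      rewrite (proof_irrelevance _ Hs' Hs). auto.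
    - exists O. intros K _ Hs'. contradiction. }
  assert (HU : U A m c M (S K0) y <= uC A m c M y - / INR (S K0)).
  { apply U_step_inv with lam CA b; auto. intros [s Hs]. apply (HK0 K0 (le_n _) s); lia. }
  pose proof (uC_le_U lam A m CA b c M (S K0) y H).
  assert (0 < / INR (S K0)) by (apply Rinv_0_lt_compat, lt_0_INR; lia). lra.
Qed.

Lemma uC_in_SA {d} lam alpha (A : Sigma d -> R) m CA c M : 0 < alpha ->
  Hyps lam A m CA (Rpower lam alpha) -> in_SA lam alpha A m (uC A m c M).
Proof.
  intros Ha H. pose proof H as (Hl & Hb & HC & HA & Hup & Hex).
  assert (HK : 0 <= CA / (1 - Rpower lam alpha)) by (apply Rmult_le_pos; [lra|apply Rlt_le, Rinv_0_lt_compat; lra]).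
  pose proof (uC_hol lam A m CA (Rpower lam alpha) c M H) as Hh. split.
  - eapply Hol_holder; eauto.
  - split; [eapply Hol_cont; eauto|]. intros x. split.
    + intros y Hy. apply seq_eq_eq in Hy. apply (uC_sub lam A m CA (Rpower lam alpha) c M x y H Hy).
    + destruct (uC_attain lam A m CA (Rpower lam alpha) c M x H) as [y [Hy1 Hy2]].
      exists y; split; auto. rewrite Hy1; intros k; reflexivity.
Qed.


Lemma Rabs_le_inv a c : Rabs a <= c -> - c <= a <= c.
Proof. intros H. pose proof (Rle_abs a). pose proof (Rle_abs (- a)). rewrite Rabs_Ropp in H1. lra. Qed.

Lemma bsum_le f g n : (forall i, (i < n)%nat -> f i <= g i) -> bsum f n <= bsum g n.
Proof. induction n; simpl; intros H; [lra|]. pose proof (H n ltac:(lia)). pose proof (IHn ltac:(intros; apply H; lia)). lra. Qed.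

Lemma telescope {d} (A : Sigma d -> R) m F n (z : Sigma d) :
  Sn A m n z = F (shiftn n z) - F z - bsum (fun i => R_F A m F (shiftn i z)) n.
Proof.
  induction n.
  - unfold Sn; simpl. rewrite shiftn_0. ring.
  - rewrite Sn_S, IHn. simpl bsum. unfold R_F. rewrite shift_shiftn. ring.
Qed.

Lemma RF_nonneg {d} lam (A : Sigma d -> R) m F : calibrated lam A m F -> forall y, 0 <= R_F A m F y.
Proof.
  intros [_ H] y. destruct (H (shift y)) as [H1 _]. specialize (H1 y (fun k => eq_refl)).
  unfold R_F. lra.
Qed.

Lemma I_zero_exact {d} lam (A : Sigma d -> R) m F x : calibrated lam A m F -> I_F_zero A m F x ->
  forall n, Sn A m n x = F (shiftn n x) - F x.
Proof.
  intros Hc HI n. set (r := fun i => R_F A m F (shiftn i x)).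
  assert (Hr : forall i, 0 <= r i) by (intros; apply (RF_nonneg lam A m F Hc)).
  assert (Hz : forall n, bsum r n = 0).
  { intros n0. apply Rle_antisym; [|apply bsum_nonneg; auto].
    apply Rnot_lt_le; intro Hp.
    destruct (HI (bsum r n0) Hp) as [N HN].
    specialize (HN (Nat.max n0 N) ltac:(lia)). unfold R_dist in HN. rewrite Rminus_0_r in HN.
    rewrite sum_f_bsum in HN. fold r in HN.
    pose proof (bsum_mono r n0 (S (Nat.max n0 N)) Hr ltac:(lia)).
    rewrite Rabs_right in HN; [lra|]. apply Rle_ge, bsum_nonneg; auto. }
  rewrite (telescope A m F). fold r. rewrite Hz. ring.
Qed.

Lemma RF_hol {d} (A : Sigma d -> R) m F CA CF b : 0 <= b < 1 -> 0 <= CA -> 0 <= CF -> Hol A CA b -> Hol F CF b ->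
  forall L u v, agree (S L) u v -> Rabs (R_F A m F u - R_F A m F v) <= (2 * CF + CA) * b ^ L.
Proof.
  intros Hb HCA HCF HA HF L u v Huv. unfold R_F.
  assert (H1 : Rabs (F (shift u) - F (shift v)) <= CF * b ^ L) by (apply HF; intros k Hk; apply Huv; lia).
  assert (H2 : Rabs (F u - F v) <= CF * b ^ S L) by (apply HF; auto).
  assert (H3 : Rabs (A u - A v) <= CA * b ^ S L) by (apply HA; auto).
  assert (Hp : b ^ S L <= b ^ L) by (apply pow_decr; [lra|lia]).
  assert (0 <= b ^ S L) by (apply pow_le; lra).
  replace (F (shift u) - F u - A u + m - (F (shift v) - F v - A v + m))
    with ((F (shift u) - F (shift v)) - (F u - F v) - (A u - A v)) by ring.
  assert (CF * b ^ S L <= CF * b ^ L) by (apply Rmult_le_compat_l; lra).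
  assert (CA * b ^ S L <= CA * b ^ L) by (apply Rmult_le_compat_l; lra).
  apply Rabs_le_inv in H1. apply Rabs_le_inv in H2. apply Rabs_le_inv in H3.
  apply Rabs_le. lra.
Qed.


Lemma lub_approx (E : R -> Prop) s eta : is_lub E s -> 0 < eta -> exists v, E v /\ s - eta < v.
Proof.
  intros [H1 H2] He. apply NNPP; intro Hn.
  assert (s <= s - eta); [|lra]. apply H2. intros v Hv. apply Rnot_lt_le; intro; apply Hn; eauto.
Qed.

Lemma forward {d} lam alpha (A : Sigma d -> R) m CA F x : 0 < lam < 1 -> 0 < alpha -> 0 <= CA ->
  Hol A CA (Rpower lam alpha) -> in_SA lam alpha A m F -> aubry lam A m x -> I_F_zero A m F x.
Proof.
  intros Hl Ha HCA HA [Hhol Hcal] Haub.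
  set (b := Rpower lam alpha) in *. pose proof (beta_bounds lam alpha Hl Ha) as Hb. fold b in Hb.
  destruct (holder_Hol lam alpha F Hl Ha Hhol) as [CF [HCF HF]]. fold b in HF.
  set (r := fun i => R_F A m F (shiftn i x)).
  assert (Hr : forall i, 0 <= r i) by (intros; apply (RF_nonneg lam A m F Hcal)).
  set (CR := 2 * CF + CA).
  assert (Key : forall eps, 0 < eps -> forall n, bsum r n <= eps).
  { intros eps He n.
    set (t := eps / (2 * (INR n + 1))).
    assert (Hn0 : 0 <= INR n) by apply pos_INR.
    assert (Ht : 0 < t) by (unfold t; apply Rdiv_lt_0_compat; lra).
    destruct (small_pow b (CF + INR n * CR) t ltac:(lra) Ht) as [L HL].
    set (N := (n + S L)%nat).
    destruct (Haub (t / 2) ltac:(lra)) as [del [Hdel Hd]].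
    set (eps' := Rmin (del / 2) (lam ^ N)).
    assert (Heps' : 0 < eps') by (apply Rmin_pos; [lra|apply pow_lt; lra]).
    assert (Heps2 : 0 < eps' < del).
    { split; [exact Heps'|]. pose proof (Rmin_l (del/2) (lam ^ N)) as Hm. fold eps' in Hm. lra. }
    destruct (Hd eps' Heps2) as [s [Hs1 Hs2]].
    rewrite Rminus_0_r in Hs2. apply Rlt_le, Rabs_le_inv, proj1 in Hs2.
    destruct (lub_approx _ s (t / 2) Hs1 ltac:(lra)) as [v [(k & z & Hk & Hzx & Hdz & ->) Hv]].
    apply seq_eq_eq in Hzx.
    assert (HagN : agree N z x).
    { apply dist_agree with lam; [lra|]. pose proof (Rmin_r (del/2) (lam ^ N)). fold eps' in H. lra. }
    fold (Sn A m k z) in Hv.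
    set (rz := fun i => R_F A m F (shiftn i z)).
    set (delta := bsum rz k).
    assert (Hrz : forall i, 0 <= rz i) by (intros; apply (RF_nonneg lam A m F Hcal)).
    assert (Hdelta : delta <= CF * b ^ L + t).
    { unfold delta, rz. pose proof (telescope A m F k z) as Tz. rewrite Hzx in Tz.
      assert (Rabs (F x - F z) <= CF * b ^ N) by (apply HF; apply agree_sym; auto).
      assert (b ^ N <= b ^ L) by (apply pow_decr; [lra|unfold N; lia]).
      apply Rabs_le_inv in H. assert (CF * b ^ N <= CF * b ^ L) by (apply Rmult_le_compat_l; lra).
      lra. }
    assert (Hdel0 : 0 <= delta) by (apply bsum_nonneg; auto).
    set (rho := INR n * CR * b ^ L).
    assert (Hrho0 : 0 <= rho) by (unfold rho, CR; apply Rmult_le_pos; [nra|apply pow_le; lra]).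
    assert (Hcmp : forall r', (r' <= n)%nat -> bsum r r' <= bsum rz r' + rho).
    { intros r' Hr'. 
      assert (bsum r r' - bsum rz r' <= bsum (fun _ => CR * b ^ L) r').
      { eapply Rle_trans; [apply Rle_abs|]. eapply Rle_trans; [apply bsum_abs|].
        apply bsum_le. intros i Hi. unfold r, rz.
        apply (RF_hol A m F CA CF b ltac:(lra) HCA HCF HA HF L).
        apply agree_shiftn. apply agree_sym. apply agree_le with N; [unfold N; lia|auto]. }
      rewrite bsum_const in H. assert (INR r' <= INR n) by (apply le_INR; auto).
      assert (0 <= CR * b ^ L) by (unfold CR; apply Rmult_le_pos; [lra|apply pow_le; lra]).
      unfold rho. nra. }
    assert (Claim : forall r', (r' <= n)%nat -> bsum r r' <= INR r' * (delta + rho)).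
    { intros r'. induction r' as [r' IH] using (well_founded_induction Wf_nat.lt_wf). intros Hr'.
      destruct r' as [|r'']; [simpl; lra|].
      destruct (Compare_dec.le_lt_dec (S r'') k) as [Hle|Hlt].
      - pose proof (Hcmp (S r'') Hr'). pose proof (bsum_mono rz (S r'') k Hrz Hle).
        assert (1 <= INR (S r'')) by (rewrite S_INR; pose proof (pos_INR r''); lra). fold delta in H0. nra.
      - pose proof (Hcmp (S r'') Hr').
        replace (S r'') with (k + (S r'' - k))%nat in H at 2 by lia.
        rewrite bsum_add in H.
        rewrite (bsum_ext (fun i => rz (k + i)%nat) r) in H.
        2: { intros i _. unfold rz, r. rewrite <- shiftn_add, Hzx. reflexivity. }
        specialize (IH (S r'' - k)%nat ltac:(lia) ltac:(lia)).
        assert (INR (S r'' - k) + 1 <= INR (S r'')).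
        { rewrite minus_INR by lia. assert (1 <= INR k) by (apply (le_INR 1); lia). lra. }
        fold delta in H. nra. }
    specialize (Claim n (le_n _)).
    assert (delta + rho < 2 * t).
    { unfold rho. assert (0 <= b ^ L) by (apply pow_le; lra). 
      assert (CF * b ^ L + INR n * CR * b ^ L < t) by (replace (CF * b ^ L + INR n * CR * b ^ L) with ((CF + INR n * CR) * b ^ L) by ring; auto).
      lra. }
    assert (INR n * (2 * t) <= eps).
    { unfold t. apply (Rmult_le_reg_r (2 * (INR n + 1))); [lra|].
      field_simplify; [nra|lra]. }
    nra. }
  intros eps He. exists O. intros k _. unfold R_dist. rewrite Rminus_0_r.
  rewrite sum_f_bsum. fold r. rewrite Rabs_right by (apply Rle_ge, bsum_nonneg; auto).
  specialize (Key (eps / 2) ltac:(lra) (S k)). lra.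
Qed.


Lemma return_chain {d} lam alpha (A : Sigma d -> R) m CA x : 0 < alpha ->
  Hyps lam A m CA (Rpower lam alpha) ->
  (forall F, in_SA lam alpha A m F -> I_F_zero A m F x) ->
  forall N eta, 0 < eta -> exists k z, (1 <= k)%nat /\ shiftn k z = x /\ agree N z x /\ Sn A m k z > - eta.
Proof.
  intros Ha H HI N eta He. pose proof H as (Hl & Hb & HC & HA & Hup & Hex).
  set (b := Rpower lam alpha) in *. set (Kh := CA / (1 - b)).
  assert (HKh : 0 <= Kh) by (unfold Kh; apply Rmult_le_pos; [lra|apply Rlt_le, Rinv_0_lt_compat; lra]).
  destruct (small_pow b (3 * Kh) (eta / 2) Hb ltac:(lra)) as [M HM].
  assert (HbM : 0 <= b ^ M) by (apply pow_le; lra).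
  destruct (recur M (fun n => (N <= n)%nat) (fun n => shiftn n x)) as [a [HaN Hrec]].
  { intros K; exists (K + N)%nat; split; lia. }
  set (c := shiftn a x). set (G := uC A m c M).
  assert (HG : in_SA lam alpha A m G) by (apply uC_in_SA with CA; auto).
  assert (HGe : forall n, Sn A m n x = G (shiftn n x) - G x).
  { apply I_zero_exact with lam. destruct HG; auto. apply HI; auto. }
  assert (HGh : Hol G Kh b) by (apply uC_hol with lam; auto).
  assert (HGc : - (2 * Kh * b ^ M) <= G c).
  { apply uC_ge with lam CA b; auto. intros K.
    destruct (Hrec (a + K + M + 1)%nat) as [bb [Hbb1 [_ Hbb2]]]. fold c in Hbb2.
    set (n := (bb - a)%nat). set (w := concat n c c).
    destruct (U_spec lam A m CA b c M K c H) as [H1 _].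
    assert (Hw : Sn A m n w <= U A m c M K c).
    { apply H1. exists n, w. repeat split; [unfold n; lia| |apply shiftn_concat].
      apply agree_le with n; [unfold n; lia|apply agree_concat]. }
    assert (Hag : agree (n + M) w c).
    { intros k Hk. unfold w, concat. destruct (Nat.ltb_spec k n); auto.
      rewrite <- (Hbb2 (k - n)%nat) by lia. unfold c, shiftn. f_equal. unfold n; lia. }
    pose proof (Sn_hol A m CA b HC Hb HA M n w c Hag) as Hd. fold Kh in Hd.
    assert (Hsc : Sn A m n c = G (shiftn bb x) - G c).
    { pose proof (Sn_add A m a n x). rewrite !HGe in H0.
      replace (a + n)%nat with bb in H0 by (unfold n; lia). fold c in H0. lra. }
    assert (Rabs (G (shiftn bb x) - G c) <= Kh * b ^ M) by (apply HGh; auto).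
    apply Rabs_le_inv in H0. apply Rabs_le_inv in Hd. lra. }
  destruct (lub_approx _ _ (eta / 4) (U_spec lam A m CA b c M 0 x H) ltac:(lra))
    as [v [(n & z' & Hn & Hz'c & Hz'x & ->) Hv]].
  pose proof (uC_le_U lam A m CA b c M 0 x H) as HGx. fold G in HGx.
  set (Z := concat a x z').
  exists (a + n)%nat, Z. repeat split.
  - lia.
  - rewrite <- shiftn_add. unfold Z; rewrite shiftn_concat; auto.
  - apply agree_le with a; auto. apply agree_concat.
  - rewrite Sn_add. unfold Z at 2; rewrite shiftn_concat.
    assert (Hag : agree (a + M) Z x).
    { intros k Hk. unfold Z, concat. destruct (Nat.ltb_spec k a); auto.
      rewrite (Hz'c (k - a)%nat) by lia. unfold c, shiftn. f_equal; lia. }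
    pose proof (Sn_hol A m CA b HC Hb HA M a Z x Hag) as Hd. fold Kh in Hd. apply Rabs_le_inv in Hd.
    rewrite HGe in Hd. fold c in Hd. lra.
Qed.

Lemma backward {d} lam alpha (A : Sigma d -> R) m CA x : 0 < alpha ->
  Hyps lam A m CA (Rpower lam alpha) ->
  (forall F, in_SA lam alpha A m F -> I_F_zero A m F x) -> aubry lam A m x.
Proof.
  intros Ha H HI. pose proof H as (Hl & Hb & HC & HA & Hup & Hex).
  set (b := Rpower lam alpha) in *. set (Kh := CA / (1 - b)).
  intros eta He.
  destruct (small_pow b Kh (eta / 2) Hb ltac:(lra)) as [N0 HN0].
  exists (lam ^ N0). split; [apply pow_lt; lra|]. intros eps [Heps1 Heps2].
  set (E := mane_set lam A m x x eps).
  assert (Hup' : forall v, E v -> v <= Kh * b ^ N0).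
  { intros v (k & z & Hk & Hzx & Hdz & ->). apply seq_eq_eq in Hzx.
    apply (closing lam A m CA b HC Hb HA Hup k z x N0 Hk Hzx).
    apply dist_agree with lam; [lra|]. lra. }
  destruct (small_pow lam 1 eps ltac:(lra) Heps1) as [N1 HN1]. rewrite Rmult_1_l in HN1.
  destruct (return_chain lam alpha A m CA x Ha H HI N1 (eta / 2) ltac:(lra)) as (k & z & Hk & Hzx & Hag & Hs).
  assert (HE : E (Sn A m k z)).
  { exists k, z. repeat split; auto.
    - rewrite Hzx; intros j; reflexivity.
    - eapply Rle_lt_trans; [apply agree_dist; [lra|exact Hag]|].
      assert (lam ^ S N1 <= lam ^ N1) by (apply pow_decr; [lra|lia]). lra. }
  assert (Hlub : is_lub E (lub_of E)) by (apply lub_of_spec; eauto).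
  exists (lub_of E). split; auto.
  destruct Hlub as [H1 H2]. specialize (H1 _ HE).
  assert (lub_of E <= Kh * b ^ N0) by (apply H2; intros v Hv; auto).
  rewrite Rminus_0_r. apply Rabs_def1; lra.
Qed.

Theorem mainTheorem14 (d : nat) (lam alpha : R)
  (Hlam : 0 < lam < 1) (Halpha : 0 < alpha)
  (A : Sigma d -> R) (HA : holder lam alpha A)
  (m : R) (Hm : is_mA lam A m) (x : Sigma d) :
  aubry lam A m x <->
  (forall F : Sigma d -> R, in_SA lam alpha A m F -> I_F_zero A m F x).
Proof.
  pose proof (beta_bounds lam alpha Hlam Halpha) as Hb.
  destruct (holder_Hol lam alpha A Hlam Halpha HA) as [CA [HCA HolA]].
  assert (H : Hyps lam A m CA (Rpower lam alpha)).
  { destruct Hm as [Hm1 Hm2]. unfold Hyps. repeat split; auto; lra. }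
  split.
  - intros Haub F HF. apply forward with lam alpha CA; auto.
  - intros HI. apply backward with alpha CA; auto.
Qed.
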